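(* Let $\alpha\in\mathbb R$, $\gamma\in\mathbb R\setminus\{0\}$, and let $K_0$ be the operator on $\ell^2(\mathbb Z)$ given by $(K_0f)(n)=\alpha f(n-1)+\alpha f(n+1)+\gamma n f(n)$. Let $\delta_n$ be the standard basis vector at $n$. Then for all $t\in\mathbb R$ and $x,n\in\mathbb Z$, $$\big[e^{-iK_0t}\delta_n\big](x)=J_{n-x}\!\Big(\tfrac{4\alpha}{\gamma}\sin\big(\tfrac{\gamma t}{2}\big)\Big)\exp\Big[-i\Big(\tfrac{\gamma t-\pi}{2}\,x+\tfrac{\gamma t+\pi}{2}\,n\Big)\Big],$$ where $J_k$ is the Bessel function of the first kind of integer order $k$.
   Context: $K_0$ is self-adjoint on the domain $\{f\in\ell^2(\mathbb Z):(nf(n))_n\in\ell^2(\mathbb Z)\}$. In the paper, $K_0$ is the infinite-volume matrix of $P(0)VP(0)$ for a uniform field $\vec B$ in the ground-state basis $|n,U\rangle$. Here $\alpha=\sqrt{B_1^2+B_2^2}\,a$, with $a$ the constant from the magnetization-profile lemma, and $\gamma=B_3$. *)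

(* Defs.v *)
From Stdlib Require Import Reals ZArith.
From Coquelicot Require Import Coquelicot.
Open Scope R_scope.

Definition seqZ := Z -> C.

Definition summableZ (g : Z -> R) : Prop :=
  ex_series (fun k : nat => g (Z.of_nat k)) /\
  ex_series (fun k : nat => g (- Z.of_nat (S k))%Z).
Definition sumZ (g : Z -> R) : R :=
  Series (fun k : nat => g (Z.of_nat k)) +
  Series (fun k : nat => g (- Z.of_nat (S k))%Z).

Definition l2 (f : seqZ) : Prop := summableZ (fun n => (Cmod (f n))^2).
Definition l2norm (f : seqZ) : R := sqrt (sumZ (fun n => (Cmod (f n))^2)).

Definition sadd (f g : seqZ) : seqZ := fun n => Cplus (f n) (g n).
Definition ssub (f g : seqZ) : seqZ := fun n => Cminus (f n) (g n).
Definition sscal (a : C) (f : seqZ) : seqZ := fun n => Cmult a (f n).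

Definition delta (n : Z) : seqZ :=
  fun x => if Z.eq_dec x n then RtoC 1 else RtoC 0.

(* The operator K_0 (as a formal difference operator on C^Z) and its
   self-adjointness domain {f in l^2 : (n f(n))_n in l^2}. *)
Definition K0 (alpha gamma : R) (f : seqZ) : seqZ :=
  fun n => Cplus (Cplus (Cmult (RtoC alpha) (f (n - 1)%Z))
                        (Cmult (RtoC alpha) (f (n + 1)%Z)))
                 (Cmult (RtoC (gamma * IZR n)) (f n)).
Definition domK0 (f : seqZ) : Prop :=
  l2 f /\ l2 (fun n => Cmult (RtoC (IZR n)) (f n)).

(* U is a strongly continuous one-parameter unitary group on l^2(Z). *)
Definition unitary_group (U : R -> seqZ -> seqZ) : Prop :=
  (forall t f, l2 f -> l2 (U t f)) /\
  (forall t a b f g, l2 f -> l2 g ->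
      U t (sadd (sscal a f) (sscal b g)) = sadd (sscal a (U t f)) (sscal b (U t g))) /\
  (forall t f, l2 f -> l2norm (U t f) = l2norm f) /\
  (forall t g, l2 g -> exists f, l2 f /\ U t f = g) /\
  (forall f, l2 f -> U 0 f = f) /\
  (forall s t f, l2 f -> U (s + t) f = U s (U t f)) /\
  (forall t f, l2 f -> is_lim (fun s => l2norm (ssub (U s f) (U t f))) t 0).

(* U(t) = e^{-i A t} where the self-adjoint generator A is exactly K_0 with
   domain domK0:  f is in the generator's domain iff the strong derivative
   lim_{h->0} (U h f - f)/h exists in l^2, and then it equals -i K_0 f. *)
Definition generated_by_K0 (alpha gamma : R) (U : R -> seqZ -> seqZ) : Prop :=
  forall f g, l2 f -> l2 g ->
    (is_lim (fun h => l2norm (ssub (sscal (RtoC (/ h)) (ssub (U h f) f)) g)) 0 0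
     <-> (domK0 f /\ g = sscal (Cmult Ci (RtoC (-1))) (K0 alpha gamma f))).

Definition besselJnat (m : nat) (x : R) : R :=
  Series (fun j : nat => (-1)^j / (INR (fact j) * INR (fact (j + m)))
                          * (x / 2) ^ (2 * j + m)).
Definition besselJ (k : Z) (x : R) : R :=
  if Z_le_dec 0 k then besselJnat (Z.to_nat k) x
  else (-1) ^ (Z.to_nat (- k)) * besselJnat (Z.to_nat (- k)) x.

Definition expmi (theta : R) : C := (cos theta, - sin theta).

(* Main.v *)
Require Import Defs.
From Stdlib Require Import Reals ZArith Lia Lra FunctionalExtensionality.
From Coquelicot Require Import Coquelicot.
Open Scope R_scope.

Definition ba (m j : nat) : R := (-1)^j / (INR (fact j) * INR (fact (j + m))).
Definition bF (m : nat) (y : R) : R := PSeries (ba m) y.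

Lemma fact_pos' n : 0 < INR (fact n).
Proof. apply lt_0_INR, lt_O_fact. Qed.

Lemma INR_factS n : INR (fact (S n)) = INR (S n) * INR (fact n).
Proof. change (fact (S n)) with (S n * fact n)%nat. apply mult_INR. Qed.

Lemma Jn_eq m z : besselJnat m z = (z/2)^m * bF m ((z/2)^2).
Proof.
  unfold besselJnat, bF, PSeries. rewrite <- Series_scal_l.
  apply Series_ext; intro j. unfold ba.
  rewrite pow_add, pow_mult. ring.
Qed.

Lemma ba_neq m j : ba m j <> 0.
Proof.
  unfold ba. apply Rmult_integral_contrapositive_currified.
  apply pow_nonzero; lra.
  apply Rinv_neq_0_compat. pose proof (fact_pos' j); pose proof (fact_pos' (j+m)); nra.
Qed.

Lemma lim_invS : is_lim_seq (fun n => / INR (S n)) 0.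
Proof.
  apply (is_lim_seq_incr_1 (fun n => / INR n)).
  replace (Finite 0) with (Rbar_inv p_infty) by reflexivity.
  apply is_lim_seq_inv. apply is_lim_seq_INR. discriminate.
Qed.

Lemma ba_radius m : CV_radius (ba m) = p_infty.
Proof.
  apply CV_radius_infinite_DAlembert. apply ba_neq.
  apply is_lim_seq_le_le with (u := fun _ => 0) (w := fun n => / INR (S n)).
  2: apply is_lim_seq_const. 2: apply lim_invS.
  intro n. unfold ba.
  replace (S n + m)%nat with (S (n + m)) by lia.
  rewrite !INR_factS.
  pose proof (fact_pos' n); pose proof (fact_pos' (n+m)).
  assert (0 < INR (S n)) by (apply lt_0_INR; lia).
  assert (1 <= INR (S (n+m))) by (apply (le_INR 1); lia).
  replace ((-1) ^ S n / (INR (S n) * INR (fact n) * (INR (S (n + m)) * INR (fact (n + m)))) /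
    ((-1) ^ n / (INR (fact n) * INR (fact (n + m))))) with (- (/ INR (S n) * / INR (S (n+m)))).
  2:{ simpl pow. field. repeat split; try lra. apply pow_nonzero; lra. }
  rewrite Rabs_Ropp, Rabs_right.
  2:{ apply Rle_ge. apply Rmult_le_pos; left; apply Rinv_0_lt_compat; lra. }
  split. apply Rmult_le_pos; left; apply Rinv_0_lt_compat; lra.
  rewrite <- (Rmult_1_r (/ INR (S n))) at 2. apply Rmult_le_compat_l.
  left; apply Rinv_0_lt_compat; lra.
  rewrite <- Rinv_1. apply Rinv_le_contravar; lra.
Qed.

Lemma ba_ex m y : ex_pseries (ba m) y.
Proof. apply CV_radius_inside. rewrite ba_radius. exact I. Qed.

Lemma bF_derive m y : is_derive (bF m) y (- bF (S m) y).
Proof.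
  unfold bF. replace (- PSeries (ba (S m)) y) with (PSeries (PS_derive (ba m)) y).
  apply is_derive_PSeries. rewrite ba_radius. exact I.
  rewrite <- PSeries_opp. apply PSeries_ext. intro j.
  unfold PS_derive, PS_opp, ba.
  replace (S j + m)%nat with (S (j + m)) by lia.
  replace (j + S m)%nat with (S (j + m)) by lia.
  rewrite !INR_factS.
  pose proof (fact_pos' j); pose proof (fact_pos' (j+m)).
  assert (0 < INR (S j)) by (apply lt_0_INR; lia).
  assert (0 < INR (S (j+m))) by (apply lt_0_INR; lia).
  set (s1 := INR (S j)) in *. set (s2 := INR (S (j+m))) in *.
  simpl pow. unfold opp; simpl. field. repeat split; lra.
Qed.

Lemma bF_rec p y : bF p y + y * bF (S (S p)) y = INR (S p) * bF (S p) y.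
Proof.
  unfold bF. rewrite <- PSeries_incr_1, <- PSeries_plus, <- PSeries_scal.
  2: apply ba_ex. 2: apply ex_pseries_incr_1, ba_ex.
  apply PSeries_ext. intros [|i]; unfold PS_plus, PS_scal, PS_incr_1, ba, plus, scal, zero; cbn -[fact INR pow]; unfold mult; cbn -[fact INR pow].
  - rewrite (INR_factS p). pose proof (fact_pos' p). assert (0 < INR (S p)) by (apply lt_0_INR; lia).
    change (fact 0) with 1%nat. simpl pow. simpl (INR 1). field. lra.
  - replace (i + S (S p))%nat with (S (S (i + p))) by lia.
    replace (S (i + S p)) with (S (S (i + p))) by lia.
    rewrite !INR_factS.
    pose proof (fact_pos' i); pose proof (fact_pos' (i+p)).
    change ((-1)^S i) with (-1 * (-1)^i).
    rewrite !S_INR, plus_INR.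
    assert (0 <= INR i) by apply pos_INR. assert (0 <= INR p) by apply pos_INR.
    field. repeat split; lra.
Qed.

Lemma is_derive_eq (f : R -> R) (x l l' : R) : is_derive f x l -> @eq R l l' -> is_derive f x l'.
Proof. intros H <-; exact H. Qed.

Lemma Jn_derive m z : is_derive (besselJnat m) z
   (INR m / 2 * (z/2)^(pred m) * bF m ((z/2)^2) - besselJnat (S m) z).
Proof.
  apply is_derive_ext with (f := fun z => (z/2)^m * bF m ((z/2)^2)).
  { intro t. symmetry. apply Jn_eq. }
  assert (Hw : forall t, is_derive (fun t => t/2) t (1/2)).
  { intro t. auto_derive; auto. }
  assert (Hy : is_derive (fun t => (t/2)^2) z (INR 2 * (1/2) * (z/2)^1)).
  { apply (is_derive_pow (fun t => t/2)). apply Hw. }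
  assert (HF : is_derive (fun t => bF m ((t/2)^2)) z (scal (INR 2 * (1/2) * (z/2)^1) (- bF (S m) ((z/2)^2)))).
  { apply (is_derive_comp (bF m) (fun t => (t/2)^2)). apply bF_derive. exact Hy. }
  assert (HP : is_derive (fun t => (t/2)^m) z (INR m * (1/2) * (z/2)^(pred m))).
  { apply (is_derive_pow (fun t => t/2)). apply Hw. }
  eapply is_derive_eq.
  apply (is_derive_mult (fun t => (t/2)^m) (fun t => bF m ((t/2)^2))). exact HP. exact HF.
  intros; apply Rmult_comm.
  rewrite (Jn_eq (S m)). unfold plus, mult, scal; simpl. unfold mult; simpl. field.
Qed.

Lemma Jn_rec p z : z * (besselJnat p z + besselJnat (S (S p)) z) = 2 * INR (S p) * besselJnat (S p) z.
Proof.
  rewrite !Jn_eq. set (y := (z/2)^2). 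
  replace (2 * INR (S p) * ((z/2)^(S p) * bF (S p) y)) with (2 * (z/2)^(S p) * (INR (S p) * bF (S p) y)) by ring.
  rewrite <- bF_rec. unfold y. simpl pow. field.
Qed.

Lemma Jn_der_S p z : is_derive (besselJnat (S p)) z ((besselJnat p z - besselJnat (S (S p)) z)/2).
Proof.
  eapply is_derive_eq. apply Jn_derive.
  rewrite !Jn_eq. set (y := (z/2)^2). simpl pred.
  replace (INR (S p) / 2 * (z / 2) ^ p * bF (S p) y) with ((z/2)^p / 2 * (INR (S p) * bF (S p) y)) by field.
  rewrite <- bF_rec. unfold y. simpl pow. field.
Qed.

Lemma Jn_der_0 z : is_derive (besselJnat 0) z (- besselJnat 1 z).
Proof.
  eapply is_derive_eq. apply Jn_derive. simpl INR. field.
Qed.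

Lemma Jn_at0 m : besselJnat m 0 = if Nat.eqb m 0 then 1 else 0.
Proof.
  rewrite Jn_eq. replace (0/2) with 0 by field.
  unfold bF. replace (0^2) with 0 by ring. rewrite PSeries_0. destruct m.
  - unfold ba. simpl. field.
  - simpl. ring.
Qed.

Lemma Series_zero : Series (fun _ => 0) = 0.
Proof.
  rewrite (Series_ext (fun _ => 0) (fun n => 0 * 0)) by (intro; ring).
  rewrite Series_scal_l. ring.
Qed.

Lemma term_le_series (a : nat -> R) k : (forall n, 0 <= a n) -> ex_series a -> a k <= Series a.
Proof.
  intros Hp Hex.
  rewrite (Series_incr_n a (S k)) by (lia || exact Hex). simpl pred.
  assert (0 <= Series (fun j => a (S k + j)%nat)).
  { rewrite <- Series_zero. apply Series_le.
    intro; split; [lra| apply Hp]. apply ex_series_incr_n. exact Hex. }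
  destruct k. simpl sum_f_R0. lra.
  rewrite tech5. pose proof (cond_pos_sum a k Hp). lra.
Qed.

Lemma exp_series x : is_series (fun n => x^n / INR (fact n)) (exp x).
Proof.
  pose proof (is_exp_Reals x) as H. unfold is_pseries in H.
  eapply is_series_ext; [|exact H]. intro n. simpl. unfold scal; simpl. unfold mult; simpl.
  rewrite pow_n_pow. unfold Rdiv. ring.
Qed.

Lemma pow_fact_le x m : 0 <= x -> x^m / INR (fact m) <= exp x.
Proof.
  intro Hx. pose proof (exp_series x) as H.
  rewrite <- (is_series_unique _ _ H).
  apply (term_le_series (fun n => x^n / INR (fact n))).
  intro n. apply Rdiv_le_0_compat. apply pow_le; auto. apply fact_pos'.
  eexists; exact H.
Qed.

Lemma bF_bound m y : Rabs (bF m y) <= exp (Rabs y) / INR (fact m).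
Proof.
  pose proof (exp_series (Rabs y)) as HE.
  assert (Hle : forall j, Rabs (ba m j * y^j) <= (Rabs y)^j / INR (fact j) / INR (fact m)).
  { intro j. unfold ba. rewrite Rabs_mult, <- RPow_abs. unfold Rdiv. rewrite Rabs_mult, pow_1_abs.
    rewrite Rabs_inv, Rabs_right.
    2:{ apply Rle_ge. pose proof (fact_pos' j); pose proof (fact_pos' (j+m)); nra. }
    pose proof (fact_pos' j); pose proof (fact_pos' (j+m)); pose proof (fact_pos' m).
    assert (INR (fact m) <= INR (fact (j+m))) by (apply le_INR, fact_le; lia).
    assert (0 <= Rabs y ^ j) by (apply pow_le, Rabs_pos).
    rewrite Rmult_1_l, Rinv_mult.
    replace (/ INR (fact j) * / INR (fact (j + m)) * Rabs y ^ j) with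
      ((Rabs y ^ j * / INR (fact j)) * / INR (fact (j + m))) by ring.
    apply Rmult_le_compat_l. apply Rmult_le_pos; auto. left; apply Rinv_0_lt_compat; auto.
    apply Rinv_le_contravar; auto. }
  assert (Hex : ex_series (fun j => (Rabs y)^j / INR (fact j) / INR (fact m))).
  { apply ex_series_scal_r. eexists; exact HE. }
  unfold bF, PSeries.
  eapply Rle_trans. apply Series_Rabs.
  { apply (@ex_series_le R_AbsRing R_CompleteNormedModule) with (2 := Hex). intro n. unfold norm; simpl. rewrite Rabs_Rabsolu. apply Hle. }
  eapply Rle_trans. apply Series_le; [|exact Hex]. intro n; split; [apply Rabs_pos| apply Hle].
  rewrite (Series_ext _ (fun n => (Rabs y ^ n / INR (fact n)) * / INR (fact m))) by (intro; reflexivity).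
  rewrite Series_scal_r. rewrite (is_series_unique _ _ HE). lra.
Qed.

Lemma Jn_bound m z : Rabs (besselJnat m z) <= exp (Rabs z) * exp (z^2).
Proof.
  rewrite Jn_eq, Rabs_mult, <- RPow_abs.
  pose proof (bF_bound m ((z/2)^2)). pose proof (fact_pos' m).
  assert (Hw : Rabs (z/2) <= Rabs z).
  { replace (Rabs (z/2)) with (Rabs z / 2). pose proof (Rabs_pos z). lra. unfold Rdiv. rewrite Rabs_mult, Rabs_inv, (Rabs_right 2) by lra. reflexivity. }
  assert (Hy : Rabs ((z/2)^2) <= z^2).
  { rewrite <- RPow_abs. replace (z^2) with (Rabs z ^2). apply pow_incr. split; auto. apply Rabs_pos.
    rewrite RPow_abs. apply Rabs_right. apply Rle_ge, pow2_ge_0. }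
  pose proof (pow_fact_le (Rabs (z/2)) m (Rabs_pos _)).
  assert (exp (Rabs ((z/2)^2)) <= exp (z^2)) by ((destruct (Req_dec (Rabs ((z/2)^2)) (z^2)) as [->|]; [lra| left; apply exp_increasing; lra])).
  assert (exp (Rabs (z/2)) <= exp (Rabs z)) by (destruct (Req_dec (Rabs (z/2)) (Rabs z)) as [->|]; [lra| left; apply exp_increasing; lra]).
  assert (0 <= Rabs (z/2) ^ m) by (apply pow_le, Rabs_pos).
  pose proof (exp_pos (Rabs ((z/2)^2))).
  apply Rle_trans with (Rabs (z/2) ^ m * (exp (Rabs ((z / 2) ^ 2)) / INR (fact m))).
  apply Rmult_le_compat_l; auto.
  replace (Rabs (z/2) ^ m * (exp (Rabs ((z / 2) ^ 2)) / INR (fact m))) with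
    ((Rabs (z/2) ^ m / INR (fact m)) * exp (Rabs ((z / 2) ^ 2))) by (field; lra).
  apply Rmult_le_compat; auto. apply Rdiv_le_0_compat; auto. left; apply exp_pos. lra.
Qed.

Lemma bJ_pos m z : besselJ (Z.of_nat m) z = besselJnat m z.
Proof.
  unfold besselJ. destruct (Z_le_dec 0 (Z.of_nat m)); [|lia]. rewrite Nat2Z.id. reflexivity.
Qed.

Lemma bJ_neg m z : besselJ (- Z.of_nat m) z = (-1)^m * besselJnat m z.
Proof.
  unfold besselJ. destruct (Z_le_dec 0 (- Z.of_nat m)).
  - assert (m = 0%nat) by lia. subst. simpl. ring.
  - rewrite Z.opp_involutive, Nat2Z.id. reflexivity.
Qed.

Lemma Z_cases k : (exists m, k = Z.of_nat m) \/ (exists m, k = (- Z.of_nat (S m))%Z).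
Proof.
  destruct (Z_le_dec 0 k).
  - left. exists (Z.to_nat k). lia.
  - right. exists (Z.to_nat (- k - 1)). lia.
Qed.

Lemma bJ_bound k z : Rabs (besselJ k z) <= exp (Rabs z) * exp (z^2).
Proof.
  destruct (Z_cases k) as [[m ->]|[m ->]].
  - rewrite bJ_pos. apply Jn_bound.
  - rewrite bJ_neg, Rabs_mult, pow_1_abs, Rmult_1_l. apply Jn_bound.
Qed.

Lemma bJ_at0 k : besselJ k 0 = if Z.eq_dec k 0 then 1 else 0.
Proof.
  destruct (Z_cases k) as [[m ->]|[m ->]].
  - rewrite bJ_pos, Jn_at0. destruct (Z.eq_dec (Z.of_nat m) 0); destruct m; simpl; try lia; reflexivity.
  - rewrite bJ_neg, Jn_at0. simpl Nat.eqb. destruct (Z.eq_dec (- Z.of_nat (S m)) 0); [lia|]. ring.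
Qed.

Lemma bJ_rec k z : z * (besselJ (k-1) z + besselJ (k+1) z) = 2 * IZR k * besselJ k z.
Proof.
  destruct (Z_cases k) as [[[|q] ->]|[q ->]].
  - replace (Z.of_nat 0 - 1)%Z with (- Z.of_nat 1)%Z by lia.
    replace (Z.of_nat 0 + 1)%Z with (Z.of_nat 1)%Z by lia.
    rewrite bJ_neg, !bJ_pos. simpl. ring.
  - replace (Z.of_nat (S q) - 1)%Z with (Z.of_nat q) by lia.
    replace (Z.of_nat (S q) + 1)%Z with (Z.of_nat (S (S q))) by lia.
    rewrite !bJ_pos, Jn_rec, <- INR_IZR_INZ. ring.
  - replace (- Z.of_nat (S q) - 1)%Z with (- Z.of_nat (S (S q)))%Z by lia.
    replace (- Z.of_nat (S q) + 1)%Z with (- Z.of_nat q)%Z by lia.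
    rewrite !bJ_neg. rewrite opp_IZR, <- INR_IZR_INZ.
    replace (z * ((-1) ^ S (S q) * besselJnat (S (S q)) z + (-1) ^ q * besselJnat q z))
      with ((-1)^q * (z * (besselJnat q z + besselJnat (S (S q)) z))) by (simpl; ring).
    rewrite Jn_rec. simpl pow. ring.
Qed.

Lemma bJ_derive k z : is_derive (besselJ k) z ((besselJ (k-1) z - besselJ (k+1) z)/2).
Proof.
  destruct (Z_cases k) as [[[|q] ->]|[q ->]].
  - replace (Z.of_nat 0 - 1)%Z with (- Z.of_nat 1)%Z by lia.
    replace (Z.of_nat 0 + 1)%Z with (Z.of_nat 1)%Z by lia.
    rewrite bJ_neg, !bJ_pos.
    apply is_derive_ext with (f := besselJnat 0). intro; symmetry; apply bJ_pos.
    eapply is_derive_eq. apply Jn_der_0. simpl. field.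
  - replace (Z.of_nat (S q) - 1)%Z with (Z.of_nat q) by lia.
    replace (Z.of_nat (S q) + 1)%Z with (Z.of_nat (S (S q))) by lia.
    rewrite !bJ_pos.
    apply is_derive_ext with (f := besselJnat (S q)). intro; symmetry; apply bJ_pos.
    apply Jn_der_S.
  - replace (- Z.of_nat (S q) - 1)%Z with (- Z.of_nat (S (S q)))%Z by lia.
    replace (- Z.of_nat (S q) + 1)%Z with (- Z.of_nat q)%Z by lia.
    rewrite !bJ_neg.
    apply is_derive_ext with (f := fun z => (-1)^(S q) * besselJnat (S q) z). intro; symmetry; apply bJ_neg.
    eapply is_derive_eq. apply is_derive_scal. apply Jn_der_S.
    simpl pow. field.
Qed.


Lemma deriv_opp (f : R -> R) s l : is_derive f s l -> is_derive (fun s => - f s) s (- l).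
Proof. intro H. exact (is_derive_opp f s l H). Qed.

Lemma cont_of_derive (f : R -> R) x l : is_derive f x l -> continuity_pt f x.
Proof.
  intro H. apply derivable_continuous_pt. exists l. apply is_derive_Reals. exact H.
Qed.

Lemma cmp_pos (f f' : R -> R) (K : R) (k : nat) :
  (forall s, is_derive f s (f' s)) -> f 0 = 0 ->
  (forall s, 0 <= s -> f' s <= K * s ^ k) ->
  forall t, 0 <= t -> f t <= K * t^(S k) / INR (S k).
Proof.
  intros Hd H0 Hb t Ht.
  set (g := fun s => f s - K * s^(S k) / INR (S k)).
  assert (Hg : forall s, is_derive g s (f' s - K * s^k)).
  { intro s. unfold g. auto_derive. eexists; apply Hd.
    replace (Derive (fun x : R => f x) s) with (f' s) by (symmetry; apply is_derive_unique; apply Hd).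
    change (match k with 0%nat => 1 | S _ => INR k + 1 end) with (INR (S k)).
    assert (0 < INR (S k)) by (apply lt_0_INR; lia). field. lra. }
  destruct (Req_dec t 0) as [->|Ht0].
  { rewrite H0. simpl. assert (0 < INR (S k)) by (apply lt_0_INR; lia). 
    replace (K * (0 * 0 ^ k) / INR (S k)) with 0 by (field; lra). lra. }
  destruct (MVT_gen g 0 t (fun s => f' s - K * s^k)) as [c [Hc Hm]].
  { intros; apply Hg. } { intros; eapply cont_of_derive; apply Hg. }
  rewrite Rmin_left in Hc by lra. rewrite Rmax_right in Hc by lra.
  unfold g in Hm. rewrite H0 in Hm.
  assert (f' c - K * c^k <= 0) by (pose proof (Hb c (proj1 Hc)); lra).
  assert (Hz : K * 0 ^ S k / INR (S k) = 0) by (rewrite pow_i by lia; unfold Rdiv; ring).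
  rewrite Hz in Hm. nra.
Qed.

Lemma cmp_abs (f f' : R -> R) (K : R) (k : nat) :
  (forall s, is_derive f s (f' s)) -> f 0 = 0 ->
  (forall s, Rabs (f' s) <= K * Rabs s ^ k) ->
  forall t, Rabs (f t) <= K * Rabs t^(S k) / INR (S k).
Proof.
  intros Hd H0 Hb.
  assert (Hpos : forall (f f' : R -> R), (forall s, is_derive f s (f' s)) -> f 0 = 0 ->
     (forall s, Rabs (f' s) <= K * Rabs s ^ k) -> forall t, 0 <= t -> Rabs (f t) <= K * Rabs t^(S k) / INR (S k)).
  { clear. intros f f' Hd H0 Hb t Ht. rewrite Rabs_right with (r := t) by lra.
    apply Rabs_le. split.
    - assert (Hn := cmp_pos (fun s => - f s) (fun s => - f' s) K k).
      assert (- f t <= K * t ^ S k / INR (S k)); [|lra].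
      apply Hn; auto. intro s; apply deriv_opp; apply Hd. rewrite H0; ring.
      intros s Hs. pose proof (Hb s). rewrite Rabs_right with (r := s) in H by lra.
      pose proof (Rabs_le_between (f' s) (K * s^k)). pose proof (Rle_abs (- f' s)). rewrite Rabs_Ropp in H2. lra.
    - apply (cmp_pos f f' K k); auto. intros s Hs. pose proof (Hb s). rewrite Rabs_right with (r := s) in H by lra.
      pose proof (Rle_abs (f' s)). lra. }
  intro t. destruct (Rle_dec 0 t) as [Ht|Ht].
  - apply (Hpos f f'); auto.
  - replace t with (- (- t)) by ring. rewrite Rabs_Ropp.
    apply (Hpos (fun s => f (- s)) (fun s => - f' (- s))).
    + intro s. eapply is_derive_eq. apply (is_derive_comp f (fun s => - s)). apply Hd.
      apply deriv_opp, is_derive_id. unfold scal; simpl. unfold mult; simpl. unfold opp, one; simpl. ring.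
    + rewrite Ropp_0; exact H0.
    + intro s. rewrite Rabs_Ropp. rewrite <- (Rabs_Ropp s). apply Hb.
    + lra.
Qed.

Definition CD (f : R -> C) (t : R) (d : C) : Prop :=
  is_derive (fun s => fst (f s)) t (fst d) /\ is_derive (fun s => snd (f s)) t (snd d).

Definition vsol (alpha gamma : R) (n x : Z) (t : R) : C :=
  Cmult (RtoC (besselJ (n - x)%Z (4 * alpha / gamma * sin (gamma * t / 2))))
          (expmi ((gamma * t - PI) / 2 * IZR x + (gamma * t + PI) / 2 * IZR n)).

Lemma Derive_bJ k z : Derive (besselJ k) z = (besselJ (k-1) z - besselJ (k+1) z)/2.
Proof. apply is_derive_unique, bJ_derive. Qed.

Lemma ex_derive_bJ k z : ex_derive (besselJ k) z.
Proof. eexists; apply bJ_derive. Qed.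

Lemma vsol_ode alpha gamma n x t : gamma <> 0 ->
  CD (vsol alpha gamma n x) t (Cmult (Cmult Ci (RtoC (-1))) (K0 alpha gamma (fun y => vsol alpha gamma n y t) x)).
Proof.
  intro Hg. unfold CD, vsol, K0, expmi. simpl fst; simpl snd.
  replace (n - (x - 1))%Z with ((n - x) + 1)%Z by lia.
  replace (n - (x + 1))%Z with ((n - x) - 1)%Z by lia.
  replace (IZR (x-1)) with (IZR x - 1) by (rewrite minus_IZR; reflexivity).
  replace (IZR (x+1)) with (IZR x + 1) by (rewrite plus_IZR; reflexivity).
  set (Z0 := 4 * alpha / gamma * sin (gamma * t / 2)).
  assert (HR := bJ_rec (n - x) Z0).
  set (J := besselJ (n - x) Z0) in *. set (Jp := besselJ (n - x + 1) Z0) in *. set (Jm := besselJ (n - x - 1) Z0) in *.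
  set (P := (gamma * t - PI) / 2 * IZR x + (gamma * t + PI) / 2 * IZR n).
  replace ((gamma * t - PI) / 2 * (IZR x - 1) + (gamma * t + PI) / 2 * IZR n) with (P + (PI/2 - gamma * t / 2)) by (unfold P; field).
  replace ((gamma * t - PI) / 2 * (IZR x + 1) + (gamma * t + PI) / 2 * IZR n) with (P - (PI/2 - gamma * t / 2)) by (unfold P; field).
  set (B := PI / 2 - gamma * t / 2). rewrite cos_plus, sin_plus, cos_minus, sin_minus. unfold B. rewrite cos_shift, sin_shift.
  rewrite minus_IZR in HR.
  assert (E : alpha * sin (gamma * t / 2) * (Jm + Jp) - gamma * (IZR n - IZR x) / 2 * J = 0).
  { unfold Z0 in HR. replace (alpha * sin (gamma * t / 2) * (Jm + Jp)) with (gamma / 4 * (4 * alpha / gamma * sin (gamma * t / 2) * (Jm + Jp))) by (field; auto).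
    rewrite HR. field. }
  assert (Hfin : forall a b : R, (a - b = sin P * (alpha * sin (gamma * t / 2) * (Jm + Jp) - gamma * (IZR n - IZR x) / 2 * J)
        \/ a - b = - sin P * (alpha * sin (gamma * t / 2) * (Jm + Jp) - gamma * (IZR n - IZR x) / 2 * J)
        \/ a - b = cos P * (alpha * sin (gamma * t / 2) * (Jm + Jp) - gamma * (IZR n - IZR x) / 2 * J)
        \/ a - b = - cos P * (alpha * sin (gamma * t / 2) * (Jm + Jp) - gamma * (IZR n - IZR x) / 2 * J)) -> a = b).
  { intros a b [H|[H|[H|H]]]; rewrite E in H; apply Rminus_diag_uniq; rewrite H; ring. }
  split.
  - auto_derive. apply ex_derive_bJ.
    rewrite Derive_bJ.
    replace (gamma * t * / 2) with (gamma * t / 2) by reflexivity.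
    replace ((gamma * t + - PI) * / 2 * IZR x + (gamma * t + PI) * / 2 * IZR n) with P by (unfold P; field).
    fold Z0 J Jp Jm.
    apply Hfin. 
    first [ left; field; auto | right; left; field; auto | right; right; left; field; auto | right; right; right; field; auto].
  - auto_derive. apply ex_derive_bJ.
    rewrite Derive_bJ.
    replace (gamma * t * / 2) with (gamma * t / 2) by reflexivity.
    replace ((gamma * t + - PI) * / 2 * IZR x + (gamma * t + PI) * / 2 * IZR n) with P by (unfold P; field).
    fold Z0 J Jp Jm.
    apply Hfin. 
    first [ left; field; auto | right; left; field; auto | right; right; left; field; auto | right; right; right; field; auto].
Qed.

Definition Kop alpha gamma (f : Z -> C) x := Cmult (Cmult Ci (RtoC (-1))) (K0 alpha gamma f x).

Lemma dmul (f g : R -> R) s a b : is_derive f s a -> is_derive g s b ->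
  is_derive (fun s => f s * g s) s (a * g s + f s * b).
Proof. intros Ha Hb. eapply is_derive_eq. exact (is_derive_mult f g s a b Ha Hb Rmult_comm). reflexivity. Qed.
Lemma dsub (f g : R -> R) s a b : is_derive f s a -> is_derive g s b ->
  is_derive (fun s => f s - g s) s (a - b).
Proof. intros Ha Hb. exact (is_derive_minus f g s a b Ha Hb). Qed.
Lemma dadd (f g : R -> R) s a b : is_derive f s a -> is_derive g s b ->
  is_derive (fun s => f s + g s) s (a + b).
Proof. intros Ha Hb. exact (is_derive_plus f g s a b Ha Hb). Qed.

Lemma CD_sub f g t a b : CD f t a -> CD g t b -> CD (fun s => Cminus (f s) (g s)) t (Cminus a b).
Proof.
  intros [H1 H2] [H3 H4]. split; simpl.
  - apply (dadd (fun s => fst (f s)) (fun s => - fst (g s))); auto. apply deriv_opp; auto.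
  - apply (dadd (fun s => snd (f s)) (fun s => - snd (g s))); auto. apply deriv_opp; auto.
Qed.

Lemma CD_mul f g t a b : CD f t a -> CD g t b -> CD (fun s => Cmult (f s) (g s)) t (Cplus (Cmult a (g t)) (Cmult (f t) b)).
Proof.
  intros [H1 H2] [H3 H4]. split; simpl.
  - eapply is_derive_eq.
    apply (dsub (fun s => fst (f s) * fst (g s)) (fun s => snd (f s) * snd (g s))); apply dmul; eauto.
    simpl; ring.
  - eapply is_derive_eq.
    apply (dadd (fun s => fst (f s) * snd (g s)) (fun s => snd (f s) * fst (g s))); apply dmul; eauto.
    simpl; ring.
Qed.

Definition gauge (gamma : R) (x : Z) (t : R) : C := (cos (gamma * IZR x * t), sin (gamma * IZR x * t)).

Lemma CD_gauge gamma x t : CD (gauge gamma x) t (Cmult (0, gamma * IZR x) (gauge gamma x t)).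
Proof.
  unfold gauge. split; simpl; auto_derive; auto; ring.
Qed.

Lemma Cmod_gauge gamma x t : Cmod (gauge gamma x t) = 1.
Proof.
  unfold gauge, Cmod; simpl fst; simpl snd. rewrite <- sqrt_1. f_equal.
  pose proof (sin2_cos2 (gamma * IZR x * t)). unfold Rsqr in H. rewrite <- H. ring.
Qed.

Lemma Cmod_le_max (z : C) B : Rabs (fst z) <= B -> Rabs (snd z) <= B -> Cmod z <= 2 * B.
Proof.
  intros H1 H2. eapply Rle_trans. apply Cmod_2Rmax.
  assert (sqrt 2 <= 2).
  { rewrite <- (sqrt_square 2) at 2 by lra. apply sqrt_le_1_alt; lra. }
  assert (Rmax (Rabs (fst z)) (Rabs (snd z)) <= B) by (apply Rmax_lub; auto).
  assert (0 <= Rmax (Rabs (fst z)) (Rabs (snd z))) by (eapply Rle_trans; [apply Rabs_pos| apply Rmax_l]).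
  assert (0 <= sqrt 2) by apply sqrt_pos.
  nra.
Qed.

Lemma gauge_eq alpha gamma (u v : Z -> R -> C) x t :
  Cplus (Cmult (0, gamma * IZR x) (Cminus (u x t) (v x t)))
        (Cminus (Kop alpha gamma (fun y => u y t) x) (Kop alpha gamma (fun y => v y t) x))
  = Cmult (0, - alpha) (Cplus (Cminus (u (x-1)%Z t) (v (x-1)%Z t)) (Cminus (u (x+1)%Z t) (v (x+1)%Z t))).
Proof.
  unfold Kop, K0. apply injective_projections; simpl; ring.
Qed.

Lemma uniq alpha gamma (u v : Z -> R -> C) M :
 (forall x t, CD (u x) t (Kop alpha gamma (fun y => u y t) x)) ->
 (forall x t, CD (v x) t (Kop alpha gamma (fun y => v y t) x)) ->
 (forall x, u x 0 = v x 0) ->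
 (forall x t, Cmod (u x t) <= M) -> (forall x t, Cmod (v x t) <= M) ->
 forall x t, u x t = v x t.
Proof.
  intros Hu Hv H0 Bu Bv.
  set (d := fun x t => Cminus (u x t) (v x t)).
  set (c := 4 * Rabs alpha).
  assert (HM : 0 <= M) by (eapply Rle_trans; [apply Cmod_ge_0| apply (Bu 0%Z 0)]).
  assert (Hc : 0 <= c) by (unfold c; pose proof (Rabs_pos alpha); lra).
  assert (Hd : forall x t, Cmod (d x t) <= 2 * M).
  { intros. unfold d. unfold Cminus. eapply Rle_trans. apply Cmod_triangle.
    rewrite Cmod_opp. pose proof (Bu x t); pose proof (Bv x t); lra. }
  assert (Hind : forall k x t, Cmod (d x t) <= 2 * M * (c * Rabs t)^k / INR (fact k)).
  { induction k as [|k IH]; intros x t.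
    - simpl. rewrite Rdiv_1_r, Rmult_1_r. apply Hd.
    - set (e := fun s => Cmult (gauge gamma x s) (d x s)).
      assert (He : forall s, CD e s (Cmult (gauge gamma x s) (Cmult (0, - alpha) (Cplus (d (x-1)%Z s) (d (x+1)%Z s))))).
      { intro s. unfold e. 
        assert (Hdd : CD (d x) s (Cminus (Kop alpha gamma (fun y => u y s) x) (Kop alpha gamma (fun y => v y s) x))).
        { apply CD_sub; auto. }
        destruct (CD_mul _ _ s _ _ (CD_gauge gamma x s) Hdd) as [A1 A2].
        unfold d in *. rewrite <- (gauge_eq alpha gamma u v x s). split.
        + eapply is_derive_eq. exact A1. simpl. ring.
        + eapply is_derive_eq. exact A2. simpl. ring. }
      set (K := 2 * Rabs alpha * (2 * M * c^k / INR (fact k))).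
      assert (Hb : forall s, Cmod (Cmult (gauge gamma x s) (Cmult (0, - alpha) (Cplus (d (x-1)%Z s) (d (x+1)%Z s)))) <= K * Rabs s ^ k).
      { intro s. rewrite !Cmod_mult, Cmod_gauge, Rmult_1_l.
        assert (Cmod (0, - alpha) = Rabs alpha).
        { unfold Cmod; simpl. rewrite <- sqrt_Rsqr_abs. f_equal. unfold Rsqr. ring. }
        rewrite H. unfold K.
        pose proof (IH (x-1)%Z s). pose proof (IH (x+1)%Z s).
        pose proof (Cmod_triangle (d (x-1)%Z s) (d (x+1)%Z s)).
        rewrite Rpow_mult_distr in H1, H2.
        assert (Cmod (Cplus (d (x - 1)%Z s) (d (x + 1)%Z s)) <= 2 * (2 * M * c ^ k / INR (fact k)) * Rabs s ^ k).
        { assert (2 * M * (c ^ k * Rabs s ^ k) / INR (fact k) = 2 * M * c ^ k / INR (fact k) * Rabs s ^ k) by (unfold Rdiv; ring).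
          lra. }
        pose proof (Rabs_pos alpha).
        replace (2 * Rabs alpha * (2 * M * c ^ k / INR (fact k)) * Rabs s ^ k) with
          (Rabs alpha * (2 * (2 * M * c ^ k / INR (fact k)) * Rabs s ^ k)) by ring.
        apply Rmult_le_compat_l; auto. }
      assert (E0 : e 0 = 0).
      { unfold e, d. rewrite H0. apply injective_projections; simpl; ring. }
      assert (F1 := cmp_abs (fun s => fst (e s)) (fun s => fst (Cmult (gauge gamma x s) (Cmult (0, - alpha) (Cplus (d (x-1)%Z s) (d (x+1)%Z s))))) K k
        (fun s => proj1 (He s))).
      assert (F2 := cmp_abs (fun s => snd (e s)) (fun s => snd (Cmult (gauge gamma x s) (Cmult (0, - alpha) (Cplus (d (x-1)%Z s) (d (x+1)%Z s))))) K k
        (fun s => proj2 (He s))).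
      specialize (F1 ltac:(cbv beta; rewrite E0; reflexivity)). specialize (F2 ltac:(cbv beta; rewrite E0; reflexivity)).
      assert (G1 : Rabs (fst (e t)) <= K * Rabs t ^ S k / INR (S k)).
      { apply F1. intro s. eapply Rle_trans; [|apply Hb]. eapply Rle_trans; [|apply Rmax_Cmod]. apply Rmax_l. }
      assert (G2 : Rabs (snd (e t)) <= K * Rabs t ^ S k / INR (S k)).
      { apply F2. intro s. eapply Rle_trans; [|apply Hb]. eapply Rle_trans; [|apply Rmax_Cmod]. apply Rmax_r. }
      assert (Cmod (d x t) = Cmod (e t)) by (unfold e; rewrite Cmod_mult, Cmod_gauge; ring).
      rewrite H. eapply Rle_trans. apply Cmod_le_max; eauto.
      unfold K, c. right.
      change (fact (S k)) with (S k * fact k)%nat. rewrite mult_INR.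
      rewrite <- !tech_pow_Rmult. rewrite (Rpow_mult_distr (4 * Rabs alpha) (Rabs t) k).
      set (P1 := (4 * Rabs alpha)^k). set (P2 := Rabs t ^ k).
      assert (0 < INR (S k)) by (apply lt_0_INR; lia).
      assert (0 < INR (fact k)) by (apply lt_0_INR, lt_O_fact).
      field. lra. }
  intros x t.
  assert (Hz : Cmod (d x t) = 0).
  { destruct (Rle_lt_or_eq_dec 0 (Cmod (d x t)) (Cmod_ge_0 _)) as [Hp|Hp]; [|auto].
    exfalso. set (D := Cmod (d x t)) in *.
    destruct (cv_speed_pow_fact (c * Rabs t) (D / (2 * M + 1))) as [N HN].
    { apply Rdiv_lt_0_compat; lra. }
    specialize (HN N (Nat.le_refl N)). unfold Rdist in HN. rewrite Rminus_0_r in HN.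
    pose proof (Hind N x t). fold D in H.
    assert (0 <= (c * Rabs t) ^ N / INR (fact N)).
    { apply Rdiv_le_0_compat. apply pow_le. pose proof (Rabs_pos t). nra. apply lt_0_INR, lt_O_fact. }
    rewrite Rabs_right in HN by lra.
    assert (D <= 2 * M * ((c * Rabs t) ^ N / INR (fact N))) by (unfold Rdiv in *; lra).
    assert (2 * M * ((c * Rabs t) ^ N / INR (fact N)) <= 2 * M * (D / (2 * M + 1))).
    { apply Rmult_le_compat_l; lra. }
    assert (2 * M * (D / (2 * M + 1)) < D).
    { apply Rmult_lt_reg_r with (2 * M + 1). lra. field_simplify; lra. }
    lra. }
  apply Cmod_eq_0 in Hz. unfold d in Hz.
  apply injective_projections; [apply (f_equal fst) in Hz | apply (f_equal snd) in Hz]; simpl in Hz; lra.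
Qed.

Lemma ex_series_Rplus (a b : nat -> R) : ex_series a -> ex_series b -> ex_series (fun n => a n + b n).
Proof. intros. exact (ex_series_plus a b H H0). Qed.

Lemma ex_series_Rscal (c : R) (a : nat -> R) : ex_series a -> ex_series (fun n => c * a n).
Proof. intros. exact (ex_series_scal_l c a H). Qed.

Lemma ex_series_Rle (a b : nat -> R) : (forall n, Rabs (a n) <= b n) -> ex_series b -> ex_series a.
Proof. intros. exact (@ex_series_le R_AbsRing R_CompleteNormedModule a b H H0). Qed.

Lemma ex_series_Rext (a b : nat -> R) : (forall n, @eq R (a n) (b n)) -> ex_series a -> ex_series b.
Proof. intros. exact (ex_series_ext a b H H0). Qed.

Lemma ex_series_zero : ex_series (fun _ : nat => 0).
Proof.
  apply (ex_series_Rext (fun n => (1/2)^n * 0)). intro; ring.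
  apply ex_series_scal_r. apply ex_series_geom. rewrite Rabs_right; lra.
Qed.

Lemma sq_ineq p q : (p + q)^2 <= 2 * p^2 + 2 * q^2.
Proof. pose proof (pow2_ge_0 (p - q)). nra. Qed.

Lemma l2_comb a b f g : l2 f -> l2 g -> l2 (sadd (sscal a f) (sscal b g)).
Proof.
  intros [F1 F2] [G1 G2].
  assert (key : forall m, Rabs ((Cmod (sadd (sscal a f) (sscal b g) m))^2) <=
             2 * (Cmod a)^2 * (Cmod (f m))^2 + 2 * (Cmod b)^2 * (Cmod (g m))^2).
  { intro m. rewrite Rabs_right by (apply Rle_ge, pow2_ge_0).
    unfold sadd, sscal.
    pose proof (Cmod_triangle (Cmult a (f m)) (Cmult b (g m))).
    rewrite !Cmod_mult in H.
    pose proof (Cmod_ge_0 (Cplus (Cmult a (f m)) (Cmult b (g m)))).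
    pose proof (Cmod_ge_0 a); pose proof (Cmod_ge_0 b); pose proof (Cmod_ge_0 (f m)); pose proof (Cmod_ge_0 (g m)).
    eapply Rle_trans. apply pow_incr. split. exact H0. exact H.
    eapply Rle_trans. apply sq_ineq. right; ring. }
  split.
  - eapply ex_series_Rle. intro k. apply key.
    apply ex_series_Rplus; apply ex_series_Rscal; auto.
  - eapply ex_series_Rle. intro k. apply key.
    apply ex_series_Rplus; apply ex_series_Rscal; auto.
Qed.

Lemma l2_finite (f : seqZ) (N : nat) : (forall m, (Z.of_nat N < Z.abs m)%Z -> f m = RtoC 0) -> l2 f.
Proof.
  intro H. split.
  - apply (ex_series_incr_n _ (S N)).
    apply (ex_series_Rext (fun _ => 0)); [|apply ex_series_zero].
    intro k. rewrite H by lia. rewrite Cmod_0. simpl; ring.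
  - apply (ex_series_incr_n _ (S N)).
    apply (ex_series_Rext (fun _ => 0)); [|apply ex_series_zero].
    intro k. rewrite H by lia. rewrite Cmod_0. simpl; ring.
Qed.

Lemma Cmod_le_l2norm f x : l2 f -> Cmod (f x) <= l2norm f.
Proof.
  intros [H1 H2]. unfold l2norm, sumZ.
  assert (P1 : 0 <= Series (fun k : nat => Cmod (f (Z.of_nat k)) ^ 2)).
  { rewrite <- Series_zero. apply Series_le; auto. intro; split; [lra| apply pow2_ge_0]. }
  assert (P2 : 0 <= Series (fun k : nat => Cmod (f (- Z.of_nat (S k))%Z) ^ 2)).
  { rewrite <- Series_zero. apply Series_le; auto. intro; split; [lra| apply pow2_ge_0]. }
  assert (Hs : Cmod (f x) ^ 2 <= Series (fun k : nat => Cmod (f (Z.of_nat k)) ^ 2) +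
                 Series (fun k : nat => Cmod (f (- Z.of_nat (S k))%Z) ^ 2)).
  { destruct (Z_le_dec 0 x).
    - replace x with (Z.of_nat (Z.to_nat x)) by lia.
      pose proof (term_le_series (fun k : nat => Cmod (f (Z.of_nat k)) ^ 2) (Z.to_nat x) (fun _ => pow2_ge_0 _) H1).
      cbv beta in H. lra.
    - replace x with (- Z.of_nat (S (Z.to_nat (- x - 1))))%Z by lia.
      pose proof (term_le_series (fun k : nat => Cmod (f (- Z.of_nat (S k))%Z) ^ 2) (Z.to_nat (- x - 1)) (fun _ => pow2_ge_0 _) H2).
      cbv beta in H. lra. }
  rewrite <- (sqrt_pow2 (Cmod (f x))) by apply Cmod_ge_0.
  apply sqrt_le_1_alt. exact Hs.
Qed.

Lemma Q_form (c : C) (A B G : seqZ) :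
  ssub (sscal c (ssub A B)) G = sadd (sscal c A) (sscal (RtoC 1) (sadd (sscal (Copp c) B) (sscal (RtoC (-1)) G))).
Proof.
  apply functional_extensionality; intro m. unfold ssub, sadd, sscal.
  apply injective_projections; simpl; ring.
Qed.

Lemma l2_Q c A B G : l2 A -> l2 B -> l2 G -> l2 (ssub (sscal c (ssub A B)) G).
Proof.
  intros. rewrite Q_form. apply l2_comb; auto. apply l2_comb; auto.
Qed.

Lemma U_Q (U : R -> seqZ -> seqZ) t c A B G : unitary_group U -> l2 A -> l2 B -> l2 G ->
  U t (ssub (sscal c (ssub A B)) G) = ssub (sscal c (ssub (U t A) (U t B))) (U t G).
Proof.
  intros [Hl2 [Hlin _]] HA HB HG.
  rewrite !Q_form. rewrite Hlin; auto. 2: apply l2_comb; auto.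
  rewrite Hlin; auto.
Qed.

Lemma ball0 (d : posreal) (h : R) : Rabs h < d -> ball 0 d h.
Proof.
  intro H. unfold ball; simpl. unfold AbsRing_ball, abs, minus, plus, opp; simpl.
  rewrite Ropp_0, Rplus_0_r. exact H.
Qed.

Lemma l2_delta n : l2 (delta n).
Proof.
  apply (l2_finite _ (Z.to_nat (Z.abs n))). intros m Hm. unfold delta.
  destruct (Z.eq_dec m n); [lia| reflexivity].
Qed.

Lemma dom_delta n : domK0 (delta n).
Proof.
  split. apply l2_delta.
  apply (l2_finite _ (Z.to_nat (Z.abs n))). intros m Hm. unfold delta.
  destruct (Z.eq_dec m n); [lia|]. apply injective_projections; simpl; ring.
Qed.

Lemma l2_g0 alpha gamma n : l2 (sscal (Cmult Ci (RtoC (-1))) (K0 alpha gamma (delta n))).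
Proof.
  apply (l2_finite _ (S (Z.to_nat (Z.abs n)))). intros m Hm. unfold sscal, K0, delta.
  destruct (Z.eq_dec (m - 1) n); [lia|]. destruct (Z.eq_dec (m + 1) n); [lia|].
  destruct (Z.eq_dec m n); [lia|].
  apply injective_projections; simpl; ring.
Qed.

Lemma u_ode alpha gamma U n (hU : unitary_group U) (hgen : generated_by_K0 alpha gamma U) t x :
  CD (fun s => U s (delta n) x) t (Kop alpha gamma (fun y => U t (delta n) y) x).
Proof.
  pose proof hU as [Hl2 [Hlin [Hiso [Hsurj [H0 [Hgrp Hcont]]]]]].
  set (d := delta n). set (g0 := sscal (Cmult Ci (RtoC (-1))) (K0 alpha gamma d)).
  assert (Hd : l2 d) by apply l2_delta.
  assert (Hg0 : l2 g0) by apply l2_g0.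
  assert (Lim0 := proj2 (hgen d g0 Hd Hg0) (conj (dom_delta n) eq_refl)).
  set (w := U t d).
  assert (Hw : l2 w) by (apply Hl2; auto).
  assert (HUg : l2 (U t g0)) by (apply Hl2; auto).
  assert (Hshift : forall h, U h w = U t (U h d)).
  { intro h. unfold w. rewrite <- Hgrp by auto. rewrite <- Hgrp by auto. f_equal. ring. }
  assert (Limw : is_lim (fun h => l2norm (ssub (sscal (RtoC (/ h)) (ssub (U h w) w)) (U t g0))) 0 0).
  { eapply is_lim_ext; [|exact Lim0]. intro h. cbv beta.
    rewrite Hshift. unfold w. rewrite <- U_Q; auto. symmetry; apply Hiso. apply l2_Q; auto. }
  destruct (proj1 (hgen w (U t g0) Hw HUg) Limw) as [_ Heq].
  assert (Hcoord : forall h, Cmod (Cminus (Cmult (RtoC (/ h)) (Cminus (U (t + h) d x) (U t d x)))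
                                           (Kop alpha gamma (fun y => U t d y) x)) <=
                    l2norm (ssub (sscal (RtoC (/ h)) (ssub (U h w) w)) (U t g0))).
  { intro h. eapply Rle_trans; [|apply (Cmod_le_l2norm _ x)].
    - right. f_equal. unfold ssub, sscal. rewrite Hshift. rewrite Heq.
      unfold w. rewrite <- Hgrp by auto. reflexivity.
    - apply l2_Q; auto. }
  apply is_lim_spec in Limw.
  split; apply is_derive_Reals; intros eps Heps;
    destruct (Limw (mkposreal eps Heps)) as [dd Hdd];
    exists dd; intros h Hh0 Hhd;
    specialize (Hdd h (ball0 dd h Hhd) Hh0); simpl in Hdd; rewrite Rminus_0_r, Rabs_right in Hdd by (apply Rle_ge, sqrt_pos);
    specialize (Hcoord h); eapply Rle_lt_trans; try exact Hdd; eapply Rle_trans; try exact Hcoord.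
  - eapply Rle_trans; [|apply Rmax_Cmod]. eapply Rle_trans; [|apply Rmax_l].
    right. unfold Kop, w. f_equal. simpl. field. exact Hh0.
  - eapply Rle_trans; [|apply Rmax_Cmod]. eapply Rle_trans; [|apply Rmax_r].
    right. unfold Kop, w. f_equal. simpl. field. exact Hh0.
Qed.

Lemma vsol_0 alpha gamma n x : vsol alpha gamma n x 0 = delta n x.
Proof.
  unfold vsol, delta, expmi.
  replace (gamma * 0 / 2) with 0 by field. rewrite sin_0, Rmult_0_r, bJ_at0.
  destruct (Z.eq_dec x n) as [->|Hne].
  - destruct (Z.eq_dec (n - n) 0); [|lia].
    replace ((gamma * 0 - PI) / 2 * IZR n + (gamma * 0 + PI) / 2 * IZR n) with 0 by field.
    rewrite cos_0, sin_0. apply injective_projections; simpl; ring.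
  - destruct (Z.eq_dec (n - x) 0); [lia|].
    apply injective_projections; simpl; ring.
Qed.

Lemma vsol_bound alpha gamma n x t :
  Cmod (vsol alpha gamma n x t) <= exp (Rabs (4 * alpha / gamma)) * exp ((Rabs (4 * alpha / gamma))^2).
Proof.
  unfold vsol. rewrite Cmod_mult, Cmod_R.
  assert (He : forall P, Cmod (expmi P) = 1).
  { intro P. unfold expmi, Cmod; simpl fst; simpl snd. rewrite <- sqrt_1. f_equal.
    pose proof (sin2_cos2 P). unfold Rsqr in H. rewrite <- H. ring. }
  rewrite He, Rmult_1_r.
  set (A := Rabs (4 * alpha / gamma)).
  set (Z0 := 4 * alpha / gamma * sin (gamma * t / 2)).
  assert (HZ : Rabs Z0 <= A).
  { unfold Z0, A. rewrite Rabs_mult. pose proof (Rabs_pos (4 * alpha / gamma)).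
    assert (Rabs (sin (gamma * t / 2)) <= 1) by (apply Rabs_le; apply SIN_bound).
    nra. }
  eapply Rle_trans. apply bJ_bound. fold Z0.
  assert (exp (Rabs Z0) <= exp A).
  { destruct (Req_dec (Rabs Z0) A) as [->|]; [lra| left; apply exp_increasing; lra]. }
  assert (exp (Z0^2) <= exp (A^2)).
  { assert (Z0^2 <= A^2).
    { rewrite <- (pow2_abs Z0). pose proof (Rabs_pos Z0). apply pow_incr. lra. }
    destruct (Req_dec (Z0^2) (A^2)) as [->|]; [lra| left; apply exp_increasing; lra]. }
  apply Rmult_le_compat; auto; left; apply exp_pos.
Qed.

Theorem mainTheorem4 (alpha gamma : R) (hgamma : gamma <> 0)
  (U : R -> seqZ -> seqZ)
  (hU : unitary_group U) (hgen : generated_by_K0 alpha gamma U) :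
  forall (t : R) (x n : Z),
    U t (delta n) x =
    Cmult (RtoC (besselJ (n - x)%Z (4 * alpha / gamma * sin (gamma * t / 2))))
          (expmi ((gamma * t - PI) / 2 * IZR x + (gamma * t + PI) / 2 * IZR n)).
Proof.
  intros t x n.
  change (U t (delta n) x = vsol alpha gamma n x t).
  pose proof hU as [Hl2 [Hlin [Hiso [Hsurj [H0 [Hgrp Hcont]]]]]].
  set (B := exp (Rabs (4 * alpha / gamma)) * exp ((Rabs (4 * alpha / gamma))^2)).
  assert (HB : 0 <= B) by (unfold B; pose proof (exp_pos (Rabs (4 * alpha / gamma))); pose proof (exp_pos ((Rabs (4 * alpha / gamma))^2)); nra).
  assert (HL : 0 <= l2norm (delta n)) by apply sqrt_pos.
  apply (uniq alpha gamma (fun y s => U s (delta n) y) (vsol alpha gamma n) (l2norm (delta n) + B)).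
  - intros y s. apply u_ode; auto.
  - intros y s. apply vsol_ode; auto.
  - intro y. rewrite vsol_0. rewrite H0 by apply l2_delta. reflexivity.
  - intros y s. cbv beta. eapply Rle_trans. apply Cmod_le_l2norm. apply Hl2, l2_delta.
    rewrite Hiso by apply l2_delta. lra.
  - intros y s. pose proof (vsol_bound alpha gamma n y s). fold B in H. lra.
Qed.
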